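(* Let $(x^k,\lambda^k)_{k\ge0}$ be generated by the proximal ADMM applied to (P). Suppose Assumption (A2) holds on a compact set $S$ with constants $M_f,L_f,C_\varphi,M_\varphi,L_\varphi$, and that $x^{k+1}\in S$ for some $k\ge0$. Then for every $i=0,\dots,n-1$, $$\|\lambda_i^{k+1}\|\le\frac{1-M_\varphi^{n-i}}{1-M_\varphi}M_f+\sum_{j=i}^{n-2}\rho_{j+1}M_\varphi^{j+1-i}\|x_{j+2}^{k+1}-x_{j+2}^k\|+\sum_{j=i}^{n-1}\frac{M_\varphi^{j-i}}{\eta_{j+1}}\|x_{j+1}^{k+1}-x_{j+1}^k\|,$$ equivalently $$\|\lambda_i^{k+1}\|\le\frac{1-M_\varphi^{n-i}}{1-M_\varphi}M_f+\sum_{j=i}^{n-1}B_{j,i}\|x_{j+1}^{k+1}-x_{j+1}^k\|,$$ where $B_{j,i}=\rho_jM_\varphi^{j-i}+\frac{M_\varphi^{j-i}}{\eta_{j+1}}$ for $j>i$ and $B_{i,i}=\frac{1}{\eta_{i+1}}$.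
   Context: Let $n,d\ge1$, and let $f_0,\dots,f_n:\mathbb{R}^d\to\mathbb{R}$ and $\varphi:\mathbb{R}^d\to\mathbb{R}^d$ be continuously differentiable; $\nabla\varphi$ denotes the Jacobian matrix and $\|\cdot\|$ the Euclidean norm / induced matrix 2-norm. Problem (P): minimize $\sum_{i=0}^n f_i(x_i)$ over $x=(x_0,\dots,x_n)\in(\mathbb{R}^d)^{n+1}$ subject to $x_{j+1}=\varphi(x_j)$, $j=0,\dots,n-1$. For penalty parameters $\rho_0,\dots,\rho_{n-1}>0$ and $\lambda=(\lambda_0,\dots,\lambda_{n-1})\in(\mathbb{R}^d)^n$, the augmented Lagrangian is $L_\rho(x,\lambda)=\sum_{i=0}^n f_i(x_i)+\sum_{i=0}^{n-1}\big(\langle\lambda_i,x_{i+1}-\varphi(x_i)\rangle+\frac{\rho_i}{2}\|x_{i+1}-\varphi(x_i)\|^2\big)$. Proximal ADMM: given $\eta_0,\dots,\eta_n>0$ and an initial point $(x^0,\lambda^0)$, for $k=0,1,\dots$, for $i=0,1,\dots,n$ in this order, $x_i^{k+1}$ is a (global) minimizer over $x_i$ of $L_\rho(x_0^{k+1},\dots,x_{i-1}^{k+1},x_i,x_{i+1}^k,\dots,x_n^k,\lambda^k)+\frac{1}{2\eta_i}\|x_i-x_i^k\|^2$ (assumed to exist), then $\lambda_j^{k+1}=\lambda_j^k+\rho_j(x_{j+1}^{k+1}-\varphi(x_j^{k+1}))$, $j=0,\dots,n-1$. Assumption (A2) on a compact set $S\subset(\mathbb{R}^d)^{n+1}$: there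 are constants $M_f,L_f,C_\varphi,M_\varphi,L_\varphi>0$ such that for all $x=(x_0,\dots,x_n),y=(y_0,\dots,y_n)\in S$ and all $i=0,\dots,n$: $\|\nabla f_i(x_i)\|\le M_f$, $\|\nabla f_i(x_i)-\nabla f_i(y_i)\|\le L_f\|x_i-y_i\|$, $\|\varphi(x_i)\|\le C_\varphi$, $\|\nabla\varphi(x_i)\|\le M_\varphi$, $\|\nabla\varphi(x_i)-\nabla\varphi(y_i)\|\le L_\varphi\|x_i-y_i\|$. Quotients of the form $\frac{M_\varphi^a-M_\varphi^b}{1-M_\varphi}$ ($a\le b$) denote $\sum_{l=a}^{b-1}M_\varphi^l$ (in particular when $M_\varphi=1$). *)

(* Defs.v *)
From HB Require Import structures.
From mathcomp Require Import all_boot all_order all_algebra.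
From mathcomp Require Import all_classical all_reals all_analysis.
Set Implicit Arguments. Unset Strict Implicit. Unset Printing Implicit Defensive.
Import Order.TTheory GRing.Theory Num.Theory.
Import numFieldNormedType.Exports.
Local Open Scope classical_set_scope.
Local Open Scope ring_scope.

Section Defs.
Variable R : realType.

Definition dotp d (u v : 'rV[R]_d) : R := \sum_(j < d) u 0 j * v 0 j.
Definition enorm d (v : 'rV[R]_d) : R := Num.sqrt (\sum_(j < d) v 0 j ^+ 2).

(* induced matrix 2-norm: sup of |A v| over the Euclidean unit ball
   (a vector v is a row vector, A v is (v *m A^T)) *)
Definition mxnorm2 d (A : 'M[R]_d) : R :=
  sup [set enorm (v *m A^T) | v in [set v : 'rV[R]_d | enorm v <= 1]].

Definition grad d (f : 'rV[R]_d -> R) (x : 'rV[R]_d) : 'rV[R]_d :=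
  \row_(j < d) ('d f x) (delta_mx 0 j).

(* Jacobian matrix in the usual convention (Jac f x) a b = d f_a / d x_b;
   mathcomp's 'J f x is its transpose (acting on row vectors). *)
Definition Jac d (f : 'rV[R]_d -> 'rV[R]_d) (x : 'rV[R]_d) : 'M[R]_d :=
  ('J f x)^T.

Definition C1_scalar d (f : 'rV[R]_d -> R) : Prop :=
  (forall x, differentiable f x) /\ continuous (grad f).
Definition C1_map d (f : 'rV[R]_d -> 'rV[R]_d) : Prop :=
  (forall x, differentiable f x) /\ continuous (Jac f).

(* the tuple (x_0,...,x_n) in (R^d)^{n+1}, stored as an (n+1) x d matrix *)
Definition tup n d (x : nat -> 'rV[R]_d) : 'M[R]_(n.+1, d) :=
  \matrix_(i < n.+1, j < d) x i 0 j.

Definition A2 n d (f : nat -> 'rV[R]_d -> R) (phi : 'rV[R]_d -> 'rV[R]_d)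
  (S : set 'M[R]_(n.+1, d)) (Mf Lf Cphi Mphi Lphi : R) : Prop :=
  0 < Mf /\ 0 < Lf /\ 0 < Cphi /\ 0 < Mphi /\ 0 < Lphi /\
  forall X Y, S X -> S Y -> forall i : 'I_n.+1,
    [/\ enorm (grad (f i) (row i X)) <= Mf,
        enorm (grad (f i) (row i X) - grad (f i) (row i Y))
          <= Lf * enorm (row i X - row i Y),
        enorm (phi (row i X)) <= Cphi,
        mxnorm2 (Jac phi (row i X)) <= Mphi &
        mxnorm2 (Jac phi (row i X) - Jac phi (row i Y))
          <= Lphi * enorm (row i X - row i Y)].

Definition auglag n d (f : nat -> 'rV[R]_d -> R) (phi : 'rV[R]_d -> 'rV[R]_d)
  (rho : nat -> R) (x lam : nat -> 'rV[R]_d) : R :=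
  \sum_(0 <= i < n.+1) f i (x i)
  + \sum_(0 <= i < n) (dotp (lam i) (x i.+1 - phi (x i))
                       + rho i / 2 * enorm (x i.+1 - phi (x i)) ^+ 2).

Definition gs_point d (xnew xold : nat -> 'rV[R]_d) (i : nat) (y : 'rV[R]_d)
  : nat -> 'rV[R]_d :=
  fun j => if (j < i)%N then xnew j else if j == i then y else xold j.

Definition prox_admm n d (f : nat -> 'rV[R]_d -> R) (phi : 'rV[R]_d -> 'rV[R]_d)
  (rho eta : nat -> R) (x lam : nat -> nat -> 'rV[R]_d) : Prop :=
  (forall k i, (i <= n)%N -> forall y : 'rV[R]_d,
     auglag n f phi rho (gs_point (x k.+1) (x k) i (x k.+1 i)) (lam k)
       + 1 / (2 * eta i) * enorm (x k.+1 i - x k i) ^+ 2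
     <= auglag n f phi rho (gs_point (x k.+1) (x k) i y) (lam k)
       + 1 / (2 * eta i) * enorm (y - x k i) ^+ 2) /\
  (forall k j, (j < n)%N ->
     lam k.+1 j = lam k j + rho j *: (x k.+1 j.+1 - phi (x k.+1 j))).

End Defs.

(* Main.v *)
Require Import Defs.
From HB Require Import structures.
From mathcomp Require Import all_boot all_order all_algebra.
From mathcomp Require Import all_classical all_reals all_analysis.
From mathcomp Require Import ring lra zify.
Import Order.TTheory GRing.Theory Num.Theory.
Import numFieldNormedType.Exports.
Local Open Scope classical_set_scope.
Local Open Scope ring_scope.


Set Implicit Arguments. Unset Strict Implicit.
Section H1.
Variable R : realType.
Variable d : nat.
Implicit Types u v w : 'rV[R]_d.

Lemma sumsq_ge0 v : 0 <= \sum_(j < d) v 0 j ^+ 2.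
Proof. by apply: sumr_ge0 => j _; rewrite sqr_ge0. Qed.

Lemma enorm_ge0 v : 0 <= enorm v.
Proof. exact: sqrtr_ge0. Qed.

Lemma enorm_sq v : enorm v ^+ 2 = dotp v v.
Proof. by rewrite /enorm sqr_sqrtr ?sumsq_ge0 // /dotp; apply: eq_bigr => j _; rewrite expr2. Qed.

Lemma dotpC u v : dotp u v = dotp v u.
Proof. by apply: eq_bigr => j _; rewrite mulrC. Qed.

Lemma dotpDr u v w : dotp u (v + w) = dotp u v + dotp u w.
Proof. by rewrite /dotp -big_split; apply: eq_bigr => j _; rewrite !mxE mulrDr. Qed.

Lemma dotpBr u v w : dotp u (v - w) = dotp u v - dotp u w.
Proof. by rewrite /dotp -sumrB; apply: eq_bigr => j _; rewrite !mxE mulrBr. Qed.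

Lemma dotpNr u v : dotp u (- v) = - dotp u v.
Proof. by rewrite /dotp -sumrN; apply: eq_bigr => j _; rewrite !mxE mulrN. Qed.

Lemma dotpZr u v (c : R) : dotp u (c *: v) = c * dotp u v.
Proof. by rewrite /dotp mulr_sumr; apply: eq_bigr => j _; rewrite !mxE mulrCA. Qed.

Lemma dotpDl u v w : dotp (v + w) u = dotp v u + dotp w u.
Proof. by rewrite dotpC dotpDr !(dotpC u). Qed.

Lemma dotpNl u v : dotp (- v) u = - dotp v u.
Proof. by rewrite dotpC dotpNr dotpC. Qed.

Lemma dotpZl u v (c : R) : dotp (c *: v) u = c * dotp v u.
Proof. by rewrite dotpC dotpZr dotpC. Qed.

Lemma dotpp_ge0 v : 0 <= dotp v v.
Proof. by rewrite -enorm_sq sqr_ge0. Qed.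

Lemma dotpp_eq0 v : dotp v v = 0 -> v = 0.
Proof.
move=> h; apply/rowP => j; rewrite mxE.
have := @psumr_eq0P R _ predT (fun j => v 0 j * v 0 j).
move=> /(_ (fun j _ => (ltac:(by rewrite -expr2 sqr_ge0) : 0 <= v 0 j * v 0 j)) h j isT) /eqP.
by rewrite mulf_eq0 orbb => /eqP.
Qed.

Lemma enorm0 : enorm (0 : 'rV[R]_d) = 0.
Proof. by rewrite /enorm big1 ?sqrtr0 // => j _; rewrite mxE expr0n. Qed.

Lemma enormN v : enorm (- v) = enorm v.
Proof. by rewrite /enorm; congr Num.sqrt; apply: eq_bigr => j _; rewrite mxE sqrrN. Qed.

Lemma enormZ v (c : R) : enorm (c *: v) = `|c| * enorm v.
Proof.
rewrite /enorm -sqrtr_sqr -sqrtrM ?sqr_ge0 //; congr Num.sqrt.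
by rewrite mulr_sumr; apply: eq_bigr => j _; rewrite mxE exprMn.
Qed.

Lemma CS u v : dotp u v <= enorm u * enorm v.
Proof.
set a := enorm u; set b := enorm v.
have ha : 0 <= a := enorm_ge0 u. have hb : 0 <= b := enorm_ge0 v.
have key : 0 <= dotp (b *: u - a *: v) (b *: u - a *: v) := dotpp_ge0 _.
rewrite !(dotpBr, dotpDl, dotpNl, dotpZl, dotpZr, dotpDr) in key.
rewrite -!enorm_sq -/a -/b (dotpC v u) in key.
have [ab0|abn0] := eqVneq (a * b) 0.
  move: ab0 => /eqP; rewrite mulf_eq0 => /orP [] /eqP h0.
  - have : u = 0 by apply: dotpp_eq0; rewrite -enorm_sq -/a h0 expr0n.
    by move=> ->; rewrite /dotp big1; [exact: mulr_ge0 | move=> j _; rewrite mxE mul0r].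
  - have : v = 0 by apply: dotpp_eq0; rewrite -enorm_sq -/b h0 expr0n.
    by move=> ->; rewrite /dotp big1; [exact: mulr_ge0 | move=> j _; rewrite mxE mulr0].
have abp : 0 < a * b by rewrite lt_def abn0 /=; apply: mulr_ge0.
have : (a * b) * dotp u v <= (a * b) * (a * b) by nra.
by rewrite ler_pM2l.
Qed.

Lemma CSabs u v : `|dotp u v| <= enorm u * enorm v.
Proof.
rewrite ler_norml CS andbT -(enormN u) -mulNr.
have := CS (- u) v; rewrite dotpNl; lra.
Qed.

Lemma enormD u v : enorm (u + v) <= enorm u + enorm v.
Proof.
have h1 := CS u v.
have h : enorm (u + v) ^+ 2 <= (enorm u + enorm v) ^+ 2.
  rewrite !enorm_sq !(dotpDl, dotpDr) (dotpC v u) sqrrD -!enorm_sq; lra.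
rewrite -ler_sqr // ?nnegrE ?addr_ge0 ?enorm_ge0 //.
Qed.

Lemma enormB u v : enorm (u - v) <= enorm u + enorm v.
Proof. by rewrite -(enormN v) enormD. Qed.

Lemma coord_le_enorm v j : `|v 0 j| <= enorm v.
Proof.
rewrite -sqrtr_sqr ler_sqrt ?sumsq_ge0 //.
rewrite (bigD1 j) //= lerDl; apply: sumr_ge0 => i _; exact: sqr_ge0.
Qed.

Lemma mxnorm2_bound (J : 'M[R]_d) w : enorm (w *m J) <= mxnorm2 J^T * enorm w.
Proof.
set E := [set enorm (v *m J^T^T) | v in [set v : 'rV[R]_d | enorm v <= 1]].
have hub : has_ubound E.
  exists (Num.sqrt (\sum_(j < d) (\sum_(i < d) `|J i j|) ^+ 2)).
  move=> _ [v /= hv <-]; rewrite trmxK ler_sqrt; last first.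
    by apply: sumr_ge0 => j _; apply: sqr_ge0.
  apply: ler_sum => j _; rewrite -real_normK ?num_real //.
  have hs : 0 <= \sum_(i < d) `|J i j| by apply: sumr_ge0 => i _; exact: normr_ge0.
  rewrite ler_sqr ?nnegrE ?normr_ge0 //.
  rewrite mxE; apply: (le_trans (ler_norm_sum _ _ _)); apply: ler_sum => i _.
  rewrite normrM ler_piMl //; apply: le_trans (coord_le_enorm v i) hv.
have [w0|wn0] := eqVneq (enorm w) 0.
  have : w = 0 by apply: dotpp_eq0; rewrite -enorm_sq w0 expr0n.
  move=> ->; rewrite mul0mx enorm0 mulr0 //.
have wp : 0 < enorm w by rewrite lt_def wn0 enorm_ge0.
have hv : E (enorm ((enorm w)^-1 *: w *m J)).
  exists ((enorm w)^-1 *: w); last by rewrite trmxK.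
  by rewrite /= enormZ ger0_norm ?invr_ge0 ?enorm_ge0 // mulVf.
have := ub_le_sup hub hv; rewrite -/(mxnorm2 J^T).
rewrite -scalemxAl enormZ ger0_norm ?invr_ge0 ?enorm_ge0 //.
by rewrite ler_pdivrMl // mulrC.
Qed.

End H1.


Set Implicit Arguments. Unset Strict Implicit.
Section H2.
Variable R : realType.
Variable d : nat.

Definition hasD {W : normedModType R} (G : 'rV[R]_d -> W) x v l :=
  derivable G x v /\ 'D_v G x = l.

Lemma min_D (G : 'rV[R]_d -> R) x v :
  derivable G x v -> (forall y, G x <= G y) -> 0 <= 'D_v G x.
Proof.
move=> dG hmin.
rewrite /derive (cvg_at_rightE (fun h : R => h^-1 *: ((G \o shift x) (h *: v) - G x))) //.
apply: limr_ge.
  apply/cvg_ex; eexists; move: dG; rewrite /derivable => cvfx.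
  move=> A /cvfx /nbhs_ballP [_ /posnumP[e] xe_A].
  by exists e%:num => //= y xe_y /gt_eqF/negbT/xe_A; exact.
near=> h.
change (0 <= h^-1 * (G (h *: v + x) - G x)).
apply: mulr_ge0.
  by rewrite invr_ge0; apply: ltW; near: h; exists 1 => /=.
by rewrite subr_ge0.
Unshelve. all: by end_near. Qed.

Lemma hasD_ext {W : normedModType R} (G H : 'rV[R]_d -> W) x v l :
  (forall y, G y = H y) -> hasD G x v l -> hasD H x v l.
Proof. by move=> e; have -> : G = H by apply/funext. Qed.

Lemma hasD_cst {W : normedModType R} (c : W) x v : hasD (fun _ => c) x v 0.
Proof. split; [exact: derivable_cst | exact: derive_cst]. Qed.

Lemma hasD_id x v : hasD id x v v.
Proof. split; [exact: derivable_id | exact: derive_id]. Qed.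

Lemma hasD_add {W : normedModType R} (G H : 'rV[R]_d -> W) x v a b :
  hasD G x v a -> hasD H x v b -> hasD (fun y => G y + H y) x v (a + b).
Proof.
move=> [dG eG] [dH eH]; split.
  exact: (derivableD dG dH).
by rewrite (deriveD dG dH) eG eH.
Qed.

Lemma hasD_opp {W : normedModType R} (G : 'rV[R]_d -> W) x v a :
  hasD G x v a -> hasD (fun y => - G y) x v (- a).
Proof.
move=> [dG eG]; split.
  exact: (derivableN dG).
by rewrite (deriveN dG) eG.
Qed.

Lemma hasD_sub {W : normedModType R} (G H : 'rV[R]_d -> W) x v a b :
  hasD G x v a -> hasD H x v b -> hasD (fun y => G y - H y) x v (a - b).
Proof. by move=> hG hH; have := hasD_add hG (hasD_opp hH). Qed.

Lemma hasD_mul (G H : 'rV[R]_d -> R) x v a b :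
  hasD G x v a -> hasD H x v b -> hasD (fun y => G y * H y) x v (G x * b + H x * a).
Proof.
move=> [dG eG] [dH eH]; split.
  exact: (derivableM dG dH).
by have := deriveM dG dH; rewrite eG eH /= => ->.
Qed.

Lemma hasD_scale (G : 'rV[R]_d -> R) (c : R) x v a :
  hasD G x v a -> hasD (fun y => c * G y) x v (c * a).
Proof.
move=> hG; have := hasD_mul (hasD_cst c x v) hG.
by rewrite mulr0 addr0.
Qed.

Lemma hasD_sum (G : 'I_d -> 'rV[R]_d -> R) x v (a : 'I_d -> R) :
  (forall j, hasD (G j) x v (a j)) ->
  hasD (fun y => \sum_(j < d) G j y) x v (\sum_(j < d) a j).
Proof.
move=> hG.
have e : (fun y => \sum_(j < d) G j y) = \sum_(j < d) G j.
  by apply/funext => y; rewrite fct_sumE.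
rewrite e; split.
  by apply: derivable_sum => j; case: (hG j).
by rewrite derive_sum; [apply: eq_bigr => j _; case: (hG j) | move=> j; case: (hG j)].
Qed.

Lemma hasD_coord (F : 'rV[R]_d -> 'rV[R]_d) x v L j :
  hasD F x v L -> hasD (fun y => F y 0 j) x v (L 0 j).
Proof.
move=> [dF eF].
set q := (fun h : R => h^-1 *: ((F \o shift x) (h *: v) - F x)).
have E : (fun h : R => h^-1 *: (((fun y => F y 0 j) \o shift x) (h *: v) - F x 0 j))
   = (fun M : 'rV[R]_d => M 0 j) \o q.
  by apply/funext => h; rewrite /q /= !mxE.
have C : q @ 0^' --> 'D_v F x := dF.
have C2 := cvg_comp _ _ C (@coord_continuous R 1 d 0 j ('D_v F x)).
split.
  by rewrite /derivable E; apply/cvg_ex; eexists; exact: C2.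
by rewrite /derive E -eF; apply: cvg_lim.
Qed.

Lemma hasD_dot (F : 'rV[R]_d -> 'rV[R]_d) x v L w :
  hasD F x v L -> hasD (fun y => dotp w (F y)) x v (dotp w L).
Proof.
move=> hF.
have := hasD_sum (fun j => hasD_scale (w 0 j) (hasD_coord j hF)).
exact: hasD_ext.
Qed.

Lemma hasD_sq (F : 'rV[R]_d -> 'rV[R]_d) x v L :
  hasD F x v L -> hasD (fun y => enorm (F y) ^+ 2) x v (2 * dotp (F x) L).
Proof.
move=> hF.
have := hasD_sum (fun j => hasD_mul (hasD_coord j hF) (hasD_coord j hF)).
have -> : \sum_(j < d) (F x 0 j * L 0 j + F x 0 j * L 0 j) = 2 * dotp (F x) L.
  by rewrite /dotp mulr_sumr; apply: eq_bigr => j _; rewrite mulr2n mulrDl mul1r.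
by apply: hasD_ext => y; rewrite enorm_sq.
Qed.

Lemma hasD_grad (g : 'rV[R]_d -> R) x v :
  differentiable g x -> hasD g x v (dotp (grad g x) v).
Proof.
move=> dg; split; first exact: diff_derivable.
rewrite deriveE // {1}(row_sum_delta v) linear_sum /dotp.
by apply: eq_bigr => j _; rewrite linearZ /= mxE mulrC.
Qed.

Lemma hasD_jac (F : 'rV[R]_d -> 'rV[R]_d) x v :
  differentiable F x -> hasD F x v (v *m 'J F x).
Proof.
move=> dF; split; first exact: diff_derivable.
exact: deriveEjacobian.
Qed.

End H2.


Set Implicit Arguments. Unset Strict Implicit.
Section H3.
Variable R : realType.

Lemma sum_ind (N m : nat) (a : R) :
  \sum_(0 <= j < N) (if j == m then a else 0) = if (m < N)%N then a else 0.
Proof.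
elim: N => [|N IH]; first by rewrite big_geq.
rewrite big_nat_recr //= IH [in RHS]ltnS [in RHS]leq_eqVlt.
case: (eqVneq m N) => [->|hne] /=.
  by rewrite ltnn add0r.
by rewrite addr0.
Qed.

Variable d : nat.
Variables (n : nat) (f : nat -> 'rV[R]_d -> R) (phi : 'rV[R]_d -> 'rV[R]_d)
  (rho : nat -> R) (xnew xold lamk : nat -> 'rV[R]_d).

Definition TmA j (p q : 'rV[R]_d) :=
  dotp (lamk j) (q - phi p) + rho j / 2 * enorm (q - phi p) ^+ 2.

Lemma auglag_diff i y y' : (i < n)%N ->
  auglag n f phi rho (gs_point xnew xold i.+1 y) lamk
  - auglag n f phi rho (gs_point xnew xold i.+1 y') lamk
  = (f i.+1 y - f i.+1 y') + (TmA i (xnew i) y - TmA i (xnew i) y')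
    + (if (i.+1 < n)%N then TmA i.+1 y (xold i.+2) - TmA i.+1 y' (xold i.+2) else 0).
Proof.
move=> hi.
rewrite /auglag.
set z := gs_point xnew xold i.+1 y.
set z' := gs_point xnew xold i.+1 y'.
have e1 : \sum_(0 <= j < n.+1) f j (z j) - \sum_(0 <= j < n.+1) f j (z' j)
   = \sum_(0 <= j < n.+1) (if j == i.+1 then f i.+1 y - f i.+1 y' else 0).
  rewrite -sumrB; apply: eq_bigr => j _.
  rewrite /z /z' /gs_point.
  by case: (ltngtP j i.+1) => [h|h|->]; rewrite ?subrr.
have e2 : \sum_(0 <= j < n) TmA j (z j) (z j.+1) - \sum_(0 <= j < n) TmA j (z' j) (z' j.+1)
   = \sum_(0 <= j < n) (if j == i then TmA i (xnew i) y - TmA i (xnew i) y' else 0)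
   + \sum_(0 <= j < n) (if j == i.+1 then TmA i.+1 y (xold i.+2) - TmA i.+1 y' (xold i.+2) else 0).
  rewrite -sumrB -big_split; apply: eq_bigr => j _.
  rewrite /z /z' /gs_point /=.
  case: (ltngtP j i) => h.
  - have h1 : (j < i.+1)%N = true by lia.
    have h2 : (j.+1 < i.+1)%N = true by lia.
    have h3 : (j == i.+1) = false by lia.
    by rewrite h1 h2 h3 subrr ?addr0 ?add0r.
  - have h1 : (j < i.+1)%N = false by lia.
    have h2 : (j.+1 < i.+1)%N = false by lia.
    have h4 : (j.+1 == i.+1) = false by lia.
    rewrite h1 h2 h4.
    case: (eqVneq j i.+1) => [e|hne].
      by rewrite e /= ?add0r.
    by rewrite subrr ?addr0 ?add0r.
  - subst j.
    have h1 : (i < i.+1)%N = true by lia.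
    have h2 : (i.+1 < i.+1)%N = false by lia.
    have h3 : (i == i.+1) = false by lia.
    by rewrite h1 h2 h3 eqxx ?addr0.
rewrite /TmA in e2.
rewrite opprD addrACA e1 e2 !sum_ind.
have -> : (i.+1 < n.+1)%N = true by lia.
by rewrite hi addrA.
Qed.

End H3.


Set Implicit Arguments. Unset Strict Implicit.

Lemma row_tup (R : realType) n d (x : nat -> 'rV[R]_d) (j : 'I_n.+1) :
  row j (tup n x) = x j.
Proof. by apply/rowP => c; rewrite !mxE. Qed.

Lemma step (R : realType) (n d : nat)
  (f : nat -> 'rV[R]_d -> R) (phi : 'rV[R]_d -> 'rV[R]_d)
  (rho eta : nat -> R) (x lam : nat -> nat -> 'rV[R]_d)
  (hadmm : prox_admm n f phi rho eta x lam) (k i : nat) (hi : (i < n)%N)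
  (Mf Mphi : R) (hM : 0 <= Mphi)
  (hdf : differentiable (f i.+1) (x k.+1 i.+1))
  (hdphi : differentiable phi (x k.+1 i.+1))
  (hg : enorm (grad (f i.+1) (x k.+1 i.+1)) <= Mf)
  (hJ : mxnorm2 (Jac phi (x k.+1 i.+1)) <= Mphi)
  (heta : 0 < eta i.+1) (hrho : (i.+1 < n)%N -> 0 <= rho i.+1) :
  enorm (lam k.+1 i) <= Mf + enorm (x k.+1 i.+1 - x k i.+1) / eta i.+1
    + (if (i.+1 < n)%N then Mphi * (enorm (lam k.+1 i.+1)
         + rho i.+1 * enorm (x k.+1 i.+2 - x k i.+2)) else 0).
Proof.
case: hadmm => hmin hupd.
set xs := x k.+1 i.+1.
set a := x k.+1 i.
set c := x k i.+2.
pose Tm := TmA phi rho (lam k).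
pose G := fun y => f i.+1 y + Tm i a y + (if (i.+1 < n)%N then Tm i.+1 y c else 0)
   + 1 / (2 * eta i.+1) * enorm (y - x k i.+1) ^+ 2.
have Gmin : forall y, G xs <= G y.
  move=> y; have := hmin k i.+1 hi y.
  have := auglag_diff f phi rho (x k.+1) (x k) (lam k) xs y hi.
  have eg : gs_point (x k.+1) (x k) i.+1 (x k.+1 i.+1) = gs_point (x k.+1) (x k) i.+1 xs by [].
  rewrite /G /Tm -/a -/c -/xs.
  by case: ifP => _; lra.
set L := lam k.+1 i.
set v := - L.
set J := 'J phi xs.
have hF1 := hasD_grad v hdf.
have hY : hasD (fun y => y - phi a) xs v (v - 0).
  exact: hasD_sub (hasD_id xs v) (hasD_cst (phi a) xs v).
have hT1 := hasD_add (hasD_dot (lam k i) hY) (hasD_scale (rho i / 2) (hasD_sq hY)).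
have hZ : hasD (fun y => c - phi y) xs v (0 - v *m J).
  exact: hasD_sub (hasD_cst c xs v) (hasD_jac v hdphi).
have hT2 : hasD (fun y => if (i.+1 < n)%N then Tm i.+1 y c else 0) xs v
   (if (i.+1 < n)%N then dotp (lam k i.+1) (0 - v *m J)
       + rho i.+1 / 2 * (2 * dotp (c - phi xs) (0 - v *m J)) else 0).
  case: ifP => _; last exact: hasD_cst.
  exact: hasD_add (hasD_dot (lam k i.+1) hZ) (hasD_scale (rho i.+1 / 2) (hasD_sq hZ)).
have hW : hasD (fun y => y - x k i.+1) xs v (v - 0).
  exact: hasD_sub (hasD_id xs v) (hasD_cst (x k i.+1) xs v).
have hT3 := hasD_scale (1 / (2 * eta i.+1)) (hasD_sq hW).
have hG := hasD_add (hasD_add (hasD_add hF1 hT1) hT2) hT3.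
have := @min_D _ _ G xs v hG.1 Gmin.
rewrite hG.2 /v !subr0 !sub0r mulNmx opprK !dotpNr.
have hL : L = lam k i + rho i *: (xs - phi a) by rewrite /L hupd.
have eLL : enorm L ^+ 2 = dotp (lam k i) L + rho i * dotp (xs - phi a) L.
  by rewrite enorm_sq {1}hL dotpDl dotpZl.
have nL0 := enorm_ge0 L.
have hE1 : - dotp (grad (f i.+1) (x k.+1 i.+1)) L <= Mf * enorm L.
  have := CSabs (grad (f i.+1) (x k.+1 i.+1)) L.
  have := ler_wpM2r nL0 hg.
  have := ler_norm (- dotp (grad (f i.+1) (x k.+1 i.+1)) L); rewrite normrN.
  lra.
have hE3 : - dotp (xs - x k i.+1) L <= enorm (xs - x k i.+1) * enorm L.
  have := CSabs (xs - x k i.+1) L.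
  have := ler_norm (- dotp (xs - x k i.+1) L); rewrite normrN.
  lra.
have hetainv : 1 / (2 * eta i.+1) * 2 = 1 / eta i.+1.
  by field; rewrite gt_eqF.
have hE3' : 1 / (2 * eta i.+1) * (2 * - dotp (xs - x k i.+1) L)
    <= enorm (xs - x k i.+1) / eta i.+1 * enorm L.
  rewrite mulrA hetainv mulrAC mul1r.
  rewrite [X in _ <= X]mulrAC; apply: ler_wpM2r; [by rewrite invr_ge0 ltW | exact: hE3].
have key : forall B, 0 <= B -> enorm L ^+ 2 <= B * enorm L -> enorm L <= B.
  by move=> B hB h; nra.
case: ifP => hb.
  have {}hrho := hrho hb.
  set u := lam k i.+1 + rho i.+1 *: (c - phi xs).
  have hu : u = lam k.+1 i.+1 - rho i.+1 *: (x k.+1 i.+2 - c).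
    rewrite (hupd k i.+1 hb) /u -addrA -scalerBr; congr (_ + _ *: _).
    by rewrite opprB [RHS]addrC [RHS]addrA subrK.
  have hnu : enorm u <= enorm (lam k.+1 i.+1) + rho i.+1 * enorm (x k.+1 i.+2 - c).
    by rewrite hu; apply: le_trans (enormB _ _) _; rewrite enormZ ger0_norm.
  have hLJ : enorm (L *m J) <= Mphi * enorm L.
    apply: le_trans (mxnorm2_bound J L) _. have h := ler_wpM2r nL0 hJ. exact: h.
  have hE2 : dotp (lam k i.+1) (L *m J) + rho i.+1 / 2 * (2 * dotp (c - phi xs) (L *m J))
      <= Mphi * (enorm (lam k.+1 i.+1) + rho i.+1 * enorm (x k.+1 i.+2 - c)) * enorm L.
    have -> : dotp (lam k i.+1) (L *m J) + rho i.+1 / 2 * (2 * dotp (c - phi xs) (L *m J))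
        = dotp u (L *m J).
      by rewrite /u [in RHS]dotpDl [in RHS]dotpZl; field.
    apply: le_trans (CS _ _) _.
    have hu0 := enorm_ge0 u.
    have hLJ0 := enorm_ge0 (L *m J).
    nra.
  move=> h0; apply: key.
    have : 0 <= Mphi * (enorm (lam k.+1 i.+1) + rho i.+1 * enorm (x k.+1 i.+2 - c)).
      apply: mulr_ge0 => //; apply: addr_ge0; first exact: enorm_ge0.
      by apply: mulr_ge0 => //; exact: enorm_ge0.
    have : 0 <= enorm (xs - x k i.+1) / eta i.+1 by apply: divr_ge0; [exact: enorm_ge0 | exact: ltW].
    have : 0 <= Mf by apply: le_trans (enorm_ge0 _) hg.
    lra.
  nra.
move=> h0; apply: key.
  have : 0 <= enorm (xs - x k i.+1) / eta i.+1 by apply: divr_ge0; [exact: enorm_ge0 | exact: ltW].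
  have : 0 <= Mf by apply: le_trans (enorm_ge0 _) hg.
  lra.
nra.
Qed.


Set Implicit Arguments. Unset Strict Implicit.

Section Bsum.
Variables (R : realType) (n : nat) (Mf Mphi : R) (rho eta e : nat -> R).

Definition Bv (i : nat) : R :=
      (\sum_(0 <= l < n - i) Mphi ^+ l) * Mf
      + \sum_(i <= j < n.-1) rho j.+1 * Mphi ^+ (j.+1 - i) * e j.+2
      + \sum_(i <= j < n) Mphi ^+ (j - i) / eta j.+1 * e j.+1.

Lemma Bv_n : Bv n = 0.
Proof.
rewrite /Bv subnn big_geq // mul0r add0r big_geq ?add0r ?big_geq //; lia.
Qed.

Lemma Bv_rec i : (i < n)%N ->
  Bv i = Mf + e i.+1 / eta i.+1 + Mphi * Bv i.+1
         + (if (i.+1 < n)%N then Mphi * rho i.+1 * e i.+2 else 0).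
Proof.
move=> hi.
have h1 : \sum_(0 <= l < n - i) Mphi ^+ l = 1 + Mphi * \sum_(0 <= l < n - i.+1) Mphi ^+ l.
  have -> : (n - i = (n - i.+1).+1)%N by lia.
  rewrite big_nat_recl // expr0 mulr_sumr; congr (_ + _).
  by apply: eq_bigr => l _; rewrite exprS.
have h3 : \sum_(i <= j < n) Mphi ^+ (j - i) / eta j.+1 * e j.+1
    = e i.+1 / eta i.+1 + Mphi * \sum_(i.+1 <= j < n) Mphi ^+ (j - i.+1) / eta j.+1 * e j.+1.
  rewrite big_ltn // subnn expr0 mul1r mulr_sumr; congr (_ + _).
    by rewrite mulrC.
  rewrite !big_nat; apply: eq_bigr => j /andP [hj _].
  have -> : (j - i = (j - i.+1).+1)%N by lia.
  by rewrite exprS !mulrA.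
have h2 : \sum_(i <= j < n.-1) rho j.+1 * Mphi ^+ (j.+1 - i) * e j.+2
    = (if (i.+1 < n)%N then Mphi * rho i.+1 * e i.+2 else 0)
      + Mphi * \sum_(i.+1 <= j < n.-1) rho j.+1 * Mphi ^+ (j.+1 - i.+1) * e j.+2.
  case: ifP => hb.
    rewrite big_ltn; last by lia.
    rewrite subSn // subnn expr1 mulr_sumr; congr (_ + _).
      by rewrite (mulrC (rho i.+1)).
    rewrite !big_nat; apply: eq_bigr => j /andP [hj _].
    have -> : (j.+1 - i = (j.+1 - i.+1).+1)%N by lia.
    rewrite exprS; ring.
  rewrite !big_geq ?mulr0 ?addr0 //; lia.
rewrite /Bv h1 h2 h3; ring.
Qed.

End Bsum.

Unset Implicit Arguments.

Theorem lemma1 (R : realType) (n d : nat) (hn : (1 <= n)%N) (hd : (1 <= d)%N)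
  (f : nat -> 'rV[R]_d -> R) (phi : 'rV[R]_d -> 'rV[R]_d)
  (hf : forall i, (i <= n)%N -> C1_scalar (f i)) (hphi : C1_map phi)
  (rho eta : nat -> R)
  (hrho : forall i, (i < n)%N -> 0 < rho i)
  (heta : forall i, (i <= n)%N -> 0 < eta i)
  (x lam : nat -> nat -> 'rV[R]_d)
  (hadmm : prox_admm n f phi rho eta x lam)
  (S : set 'M[R]_(n.+1, d)) (hS : compact S)
  (Mf Lf Cphi Mphi Lphi : R) (hA2 : A2 f phi S Mf Lf Cphi Mphi Lphi)
  (k : nat) (hk : S (tup n (x k.+1))) :
  forall i, (i < n)%N ->
    enorm (lam k.+1 i) <=
      (\sum_(0 <= l < n - i) Mphi ^+ l) * Mf
      + \sum_(i <= j < n.-1)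
          rho j.+1 * Mphi ^+ (j.+1 - i) * enorm (x k.+1 j.+2 - x k j.+2)
      + \sum_(i <= j < n)
          Mphi ^+ (j - i) / eta j.+1 * enorm (x k.+1 j.+1 - x k j.+1).
Proof.
set e := fun j => enorm (x k.+1 j - x k j).
move=> i hi.
case: hA2 => _ [_ [_ [hM0 [_ hA]]]].
have hM : 0 <= Mphi := ltW hM0.
have main : forall t i, (i < n)%N -> (n - i <= t)%N -> enorm (lam k.+1 i) <= Bv n Mf Mphi rho eta e i.
  elim=> [|t IH] j hj ht; first by lia.
  have hj1 : (j.+1 < n.+1)%N by lia.
  have [hg _ _ hJ _] := hA _ _ hk hk (Ordinal hj1).
  rewrite !row_tup /= in hg hJ.
  have hst := step hadmm hj hM ((hf j.+1 hj1).1 _) (hphi.1 _) hg hJ (heta j.+1 hj1)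
     (fun hb => ltW (hrho j.+1 hb)).
  apply: le_trans hst _.
  rewrite (Bv_rec _ _ _ _ _ hj).
  case: ifP => hb.
    have := IH j.+1 hb ltac:(lia).
    have : 0 <= Mphi * rho j.+1 * e j.+2.
      by apply: mulr_ge0; [apply: mulr_ge0 => //; exact: ltW (hrho _ hb) | exact: enorm_ge0].
    rewrite /e /=; nra.
  have -> : j.+1 = n by lia.
  by rewrite Bv_n mulr0 !addr0.
change (enorm (lam k.+1 i) <= Bv n Mf Mphi rho eta e i).
exact: main (n - i)%N i hi (leqnn _).
Qed.
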